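(* Let $Q=[0,L]\times[0,1]$ with $L\ge1$, uniform density $\phi\equiv1$, $n=2$ generators, and $\mathcal H(p_1,p_2)=\int_Q\min_{i=1,2}\|q-p_i\|^2dq$. Consider the centroidal Voronoi configuration $p_1=(L/2,1/4)$, $p_2=(L/2,3/4)$, whose Voronoi cells are the two halves of $Q$ separated by the segment joining the midpoints of the two sides of length 1. If $L>\sqrt{3/2}$, the Hessian $\nabla^2\mathcal H$ at this configuration has exactly one negative eigenvalue; if $L=\sqrt{3/2}$, it has a zero eigenvalue.
   Context: The Voronoi cell of $p_i$ is $V_i=\{q\in Q:\|q-p_i\|\le\|q-p_j\|\ \forall j\}$; a configuration is centroidal if each $p_i$ is the centroid of $V_i$. The Hessian is with respect to $(p_1,p_2)\in\mathbb{R}^4$. *)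

(* Defs.v *)
From Stdlib Require Import Reals Lra Lia.
Open Scope R_scope.

(* Points of R^4 = (x1,y1,x2,y2) are represented as functions nat -> R,
   only indices 0..3 being relevant: p1 = (v 0, v 1), p2 = (v 2, v 3). *)

Definition IsRInt (f : R -> R) (a b v : R) : Prop :=
  exists pr : Riemann_integrable f a b, RiemannInt pr = v.

Definition cvt_integrand (v : nat -> R) (x y : R) : R :=
  Rmin ((x - v 0%nat)^2 + (y - v 1%nat)^2) ((x - v 2%nat)^2 + (y - v 3%nat)^2).

(* Hf v is the integral of the integrand over Q = [0,L] x [0,1]
   (computed as an iterated Riemann integral; the integrand is continuous). *)
Definition IsCVTEnergy (L : R) (Hf : (nat -> R) -> R) : Prop :=
  forall v : nat -> R, exists g : R -> R,
    (forall x, 0 <= x <= L -> IsRInt (fun y => cvt_integrand v x y) 0 1 (g x)) /\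
    IsRInt g 0 L (Hf v).

Definition upd (v : nat -> R) (i : nat) (t : R) : nat -> R :=
  fun k => if Nat.eqb k i then t else v k.

Definition partial (f : (nat -> R) -> R) (v : nat -> R) (i : nat) (l : R) : Prop :=
  derivable_pt_lim (fun t => f (upd v i t)) (v i) l.

Definition IsHessian4 (f : (nat -> R) -> R) (v : nat -> R) (M : nat -> nat -> R) : Prop :=
  exists G : nat -> (nat -> R) -> R, exists d : R, 0 < d /\
    (forall w : nat -> R, (forall k, (k < 4)%nat -> Rabs (w k - v k) < d) ->
       forall i, (i < 4)%nat -> partial f w i (G i w)) /\
    (forall i j, (i < 4)%nat -> (j < 4)%nat -> partial (G i) v j (M i j)).

Definition minor (j : nat) (M : nat -> nat -> R) : nat -> nat -> R :=
  fun i k => M (S i) (if Nat.ltb k j then k else S k).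

Fixpoint detn (n : nat) (M : nat -> nat -> R) : R :=
  match n with
  | O => 1
  | S m => sum_f_R0 (fun j => (-1)^j * M 0%nat j * detn m (minor j M)) m
  end.

Definition charpoly4 (M : nat -> nat -> R) (t : R) : R :=
  detn 4 (fun i j => (if Nat.eqb i j then t else 0) - M i j).

Definition is_eigenvalue4 (M : nat -> nat -> R) (lam : R) : Prop :=
  charpoly4 M lam = 0.

Definition simple_eigenvalue4 (M : nat -> nat -> R) (lam : R) : Prop :=
  is_eigenvalue4 M lam /\
  exists d : R, derivable_pt_lim (charpoly4 M) lam d /\ d <> 0.

(* Exactly one negative eigenvalue, counted with (algebraic) multiplicity. *)
Definition exactly_one_negative_eigenvalue4 (M : nat -> nat -> R) : Prop :=
  exists lam : R, lam < 0 /\ simple_eigenvalue4 M lam /\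
    (forall mu : R, mu < 0 -> is_eigenvalue4 M mu -> mu = lam).

Definition config (L : R) : nat -> R :=
  fun k => match k with
           | 0%nat => L / 2
           | 1%nat => 1 / 4
           | 2%nat => L / 2
           | _ => 3 / 4
           end.

(* Main.v *)
Require Import Defs.
From Stdlib Require Import Reals Lra Lia.
From Coquelicot Require Import Coquelicot.
Open Scope R_scope.
Definition Psi (a b x1 y1 x2 y2 x : R) : R :=
  (((((1/3)*x + ((-1)*x*y2 + (1)*x*y2^2)) + ((1)*x*x2^2 + ((-1)*x*a*y2^2 + (-1)*x*a*x2^2))) + (((1)*x*a*y1^2 + ((1)*x*a*x1^2 + (1)*x*a^2*y2)) + ((-1)*x*a^2*y1 + ((-1)*x^2*x2 + (-1/2)*x^2*b*y2^2)))) + ((((-1/2)*x^2*b*x2^2 + ((1/2)*x^2*b*y1^2 + (1/2)*x^2*b*x1^2)) + ((1)*x^2*a*x2 + ((-1)*x^2*a*x1 + (1)*x^2*a*b*y2))) + (((-1)*x^2*a*b*y1 + ((1/3)*x^3 + (2/3)*x^3*b*x2)) + ((-2/3)*x^3*b*x1 + ((1/3)*x^3*b^2*y2 + (-1/3)*x^3*b^2*y1))))).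

Definition Psi_a (a b x1 y1 x2 y2 x : R) : R :=
  ((((-1)*x*y2^2 + (-1)*x*x2^2) + ((1)*x*y1^2 + ((1)*x*x1^2 + (2)*x*a*y2))) + (((-2)*x*a*y1 + (1)*x^2*x2) + ((-1)*x^2*x1 + ((1)*x^2*b*y2 + (-1)*x^2*b*y1)))).

Definition Psi_b (a b x1 y1 x2 y2 x : R) : R :=
  ((((-1/2)*x^2*y2^2 + (-1/2)*x^2*x2^2) + ((1/2)*x^2*y1^2 + ((1/2)*x^2*x1^2 + (1)*x^2*a*y2))) + (((-1)*x^2*a*y1 + (2/3)*x^3*x2) + ((-2/3)*x^3*x1 + ((2/3)*x^3*b*y2 + (-2/3)*x^3*b*y1)))).

Definition Psi_x1 (a b x1 y1 x2 y2 x : R) : R :=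
  (((2)*x*a*x1 + (1)*x^2*b*x1) + ((-1)*x^2*a + (-2/3)*x^3*b)).

Definition Psi_y1 (a b x1 y1 x2 y2 x : R) : R :=
  (((2)*x*a*y1 + (-1)*x*a^2) + ((1)*x^2*b*y1 + ((-1)*x^2*a*b + (-1/3)*x^3*b^2))).

Definition Psi_x2 (a b x1 y1 x2 y2 x : R) : R :=
  (((2)*x*x2 + ((-2)*x*a*x2 + (-1)*x^2)) + ((-1)*x^2*b*x2 + ((1)*x^2*a + (2/3)*x^3*b))).

Definition Psi_y2 (a b x1 y1 x2 y2 x : R) : R :=
  (((-1)*x + ((2)*x*y2 + (-2)*x*a*y2)) + (((1)*x*a^2 + (-1)*x^2*b*y2) + ((1)*x^2*a*b + (1/3)*x^3*b^2))).
Definition alp (x1 y1 x2 y2 : R) : R := (x2^2+y2^2-x1^2-y1^2)/(2*(y2-y1)).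
Definition bet (x1 y1 x2 y2 : R) : R := -(x2-x1)/(y2-y1).
Definition F4 (L x1 y1 x2 y2 : R) : R := Psi (alp x1 y1 x2 y2) (bet x1 y1 x2 y2) x1 y1 x2 y2 L.
Definition G4 (L : R) (i:nat) (x1 y1 x2 y2 : R) : R :=
  let a := alp x1 y1 x2 y2 in let b := bet x1 y1 x2 y2 in
  let A := a*L+b*L^2/2 in let B := a*L^2/2+b*L^3/3 in let C := a*a*L+a*b*L^2+b*b*L^3/3 in
  match i with
  | 0%nat => 2*x1*A-2*B
  | 1%nat => 2*y1*A-C
  | 2%nat => 2*x2*(L-A)-L^2+2*B
  | _ => 2*y2*(L-A)-L+C end.

Lemma Psia0 (x1 y1 x2 y2 x : R) : y2 - y1 <> 0 -> Psi_a (alp x1 y1 x2 y2) (bet x1 y1 x2 y2) x1 y1 x2 y2 x = 0.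
Proof. intros H. unfold Psi_a, alp, bet. field. exact H. Qed.
Lemma Psib0 (x1 y1 x2 y2 x : R) : y2 - y1 <> 0 -> Psi_b (alp x1 y1 x2 y2) (bet x1 y1 x2 y2) x1 y1 x2 y2 x = 0.
Proof. intros H. unfold Psi_b, alp, bet. field. exact H. Qed.

Lemma dF0 (L x1 y1 x2 y2 : R) : y2 - y1 <> 0 ->
  is_derive (fun t => F4 L t y1 x2 y2) x1 (G4 L 0 x1 y1 x2 y2).
Proof. intros H.
 assert (Ha : ex_derive (fun t => alp t y1 x2 y2) x1) by (unfold alp; auto_derive; repeat split; auto; intro; apply H; lra).
 assert (Hb : ex_derive (fun t => bet t y1 x2 y2) x1) by (unfold bet; auto_derive; repeat split; auto; intro; apply H; lra).
 set (fa := fun t => alp t y1 x2 y2) in *. set (fb := fun t => bet t y1 x2 y2) in *.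
 assert (E : is_derive (fun t => Psi (fa t) (fb t) t y1 x2 y2 L) x1
   (Psi_a (fa x1) (fb x1) x1 y1 x2 y2 L * Derive fa x1 + Psi_b (fa x1) (fb x1) x1 y1 x2 y2 L * Derive fb x1
    + Psi_x1 (fa x1) (fb x1) x1 y1 x2 y2 L)).
 { unfold Psi, Psi_a, Psi_b, Psi_x1. auto_derive. repeat split; assumption. change (fun x : R => fa x) with fa. change (fun x : R => fb x) with fb. clearbody fa fb. field. }
 unfold fa, fb in E. rewrite Psia0, Psib0 in E by exact H. rewrite !Rmult_0_l, !Rplus_0_l in E.
 replace (G4 L 0 x1 y1 x2 y2) with (Psi_x1 (alp x1 y1 x2 y2) (bet x1 y1 x2 y2) x1 y1 x2 y2 L).
 - exact E.
 - unfold G4, Psi_x1. cbv zeta. field.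
Qed.
Lemma dF1 (L x1 y1 x2 y2 : R) : y2 - y1 <> 0 ->
  is_derive (fun t => F4 L x1 t x2 y2) y1 (G4 L 1 x1 y1 x2 y2).
Proof. intros H.
 assert (Ha : ex_derive (fun t => alp x1 t x2 y2) y1) by (unfold alp; auto_derive; repeat split; auto; intro; apply H; lra).
 assert (Hb : ex_derive (fun t => bet x1 t x2 y2) y1) by (unfold bet; auto_derive; repeat split; auto; intro; apply H; lra).
 set (fa := fun t => alp x1 t x2 y2) in *. set (fb := fun t => bet x1 t x2 y2) in *.
 assert (E : is_derive (fun t => Psi (fa t) (fb t) x1 t x2 y2 L) y1
   (Psi_a (fa y1) (fb y1) x1 y1 x2 y2 L * Derive fa y1 + Psi_b (fa y1) (fb y1) x1 y1 x2 y2 L * Derive fb y1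
    + Psi_y1 (fa y1) (fb y1) x1 y1 x2 y2 L)).
 { unfold Psi, Psi_a, Psi_b, Psi_y1. auto_derive. repeat split; assumption. change (fun x : R => fa x) with fa. change (fun x : R => fb x) with fb. clearbody fa fb. field. }
 unfold fa, fb in E. rewrite Psia0, Psib0 in E by exact H. rewrite !Rmult_0_l, !Rplus_0_l in E.
 replace (G4 L 1 x1 y1 x2 y2) with (Psi_y1 (alp x1 y1 x2 y2) (bet x1 y1 x2 y2) x1 y1 x2 y2 L).
 - exact E.
 - unfold G4, Psi_y1. cbv zeta. field.
Qed.
Lemma dF2 (L x1 y1 x2 y2 : R) : y2 - y1 <> 0 ->
  is_derive (fun t => F4 L x1 y1 t y2) x2 (G4 L 2 x1 y1 x2 y2).
Proof. intros H.
 assert (Ha : ex_derive (fun t => alp x1 y1 t y2) x2) by (unfold alp; auto_derive; repeat split; auto; intro; apply H; lra).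
 assert (Hb : ex_derive (fun t => bet x1 y1 t y2) x2) by (unfold bet; auto_derive; repeat split; auto; intro; apply H; lra).
 set (fa := fun t => alp x1 y1 t y2) in *. set (fb := fun t => bet x1 y1 t y2) in *.
 assert (E : is_derive (fun t => Psi (fa t) (fb t) x1 y1 t y2 L) x2
   (Psi_a (fa x2) (fb x2) x1 y1 x2 y2 L * Derive fa x2 + Psi_b (fa x2) (fb x2) x1 y1 x2 y2 L * Derive fb x2
    + Psi_x2 (fa x2) (fb x2) x1 y1 x2 y2 L)).
 { unfold Psi, Psi_a, Psi_b, Psi_x2. auto_derive. repeat split; assumption. change (fun x : R => fa x) with fa. change (fun x : R => fb x) with fb. clearbody fa fb. field. }
 unfold fa, fb in E. rewrite Psia0, Psib0 in E by exact H. rewrite !Rmult_0_l, !Rplus_0_l in E.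
 replace (G4 L 2 x1 y1 x2 y2) with (Psi_x2 (alp x1 y1 x2 y2) (bet x1 y1 x2 y2) x1 y1 x2 y2 L).
 - exact E.
 - unfold G4, Psi_x2. cbv zeta. field.
Qed.
Lemma dF3 (L x1 y1 x2 y2 : R) : y2 - y1 <> 0 ->
  is_derive (fun t => F4 L x1 y1 x2 t) y2 (G4 L 3 x1 y1 x2 y2).
Proof. intros H.
 assert (Ha : ex_derive (fun t => alp x1 y1 x2 t) y2) by (unfold alp; auto_derive; repeat split; auto; intro; apply H; lra).
 assert (Hb : ex_derive (fun t => bet x1 y1 x2 t) y2) by (unfold bet; auto_derive; repeat split; auto; intro; apply H; lra).
 set (fa := fun t => alp x1 y1 x2 t) in *. set (fb := fun t => bet x1 y1 x2 t) in *.
 assert (E : is_derive (fun t => Psi (fa t) (fb t) x1 y1 x2 t L) y2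
   (Psi_a (fa y2) (fb y2) x1 y1 x2 y2 L * Derive fa y2 + Psi_b (fa y2) (fb y2) x1 y1 x2 y2 L * Derive fb y2
    + Psi_y2 (fa y2) (fb y2) x1 y1 x2 y2 L)).
 { unfold Psi, Psi_a, Psi_b, Psi_y2. auto_derive. repeat split; assumption. change (fun x : R => fa x) with fa. change (fun x : R => fb x) with fb. clearbody fa fb. field. }
 unfold fa, fb in E. rewrite Psia0, Psib0 in E by exact H. rewrite !Rmult_0_l, !Rplus_0_l in E.
 replace (G4 L 3 x1 y1 x2 y2) with (Psi_y2 (alp x1 y1 x2 y2) (bet x1 y1 x2 y2) x1 y1 x2 y2 L).
 - exact E.
 - unfold G4, Psi_y2. cbv zeta. field.
Qed.

Lemma IsRInt_is (f : R -> R) (a b v : R) : IsRInt f a b v -> is_RInt f a b v.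
Proof. intros [pr <-]. rewrite <- RInt_Reals. exact (RInt_correct f a b (ex_RInt_Reals_1 f a b pr)). Qed.

Lemma IsRInt_uniq (f : R -> R) (a b v v' : R) : IsRInt f a b v -> is_RInt f a b v' -> v = v'.
Proof. intros H1 H2. apply IsRInt_is in H1.
  rewrite <- (is_RInt_unique _ _ _ _ H1). now apply is_RInt_unique. Qed.

Definition Phi (a b x1 y1 x2 y2 x : R) : R :=
  (x-x1)^2*(a+b*x) + ((a+b*x-y1)^3+y1^3)/3 + (x-x2)^2*(1-(a+b*x)) + ((1-y2)^3-(a+b*x-y2)^3)/3.

Lemma poly_RInt (g f : R -> R) (a b v : R) :
  (forall x, is_derive f x (g x)) -> (forall x, ex_derive g x) -> f b - f a = v ->
  is_RInt g a b v.
Proof. intros H1 H2 H3. rewrite <- H3.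
  apply (is_RInt_derive f g a b); intros; auto.
  exact (ex_derive_continuous (K:=R_AbsRing) (V:=R_NormedModule) g x (H2 x)). Qed.

Lemma inner (x1 y1 x2 y2 x : R) : 0 < y2 - y1 ->
  0 <= alp x1 y1 x2 y2 + bet x1 y1 x2 y2 * x <= 1 ->
  is_RInt (fun y => Rmin ((x - x1)^2 + (y - y1)^2) ((x - x2)^2 + (y - y2)^2)) 0 1
    (Phi (alp x1 y1 x2 y2) (bet x1 y1 x2 y2) x1 y1 x2 y2 x).
Proof.
  intros Hd Hh. set (h := alp x1 y1 x2 y2 + bet x1 y1 x2 y2 * x) in *.
  assert (K : forall y, ((x - x2)^2 + (y - y2)^2) - ((x - x1)^2 + (y - y1)^2) = 2*(y2-y1)*(h-y)).
  { intros y. unfold h, alp, bet. field. lra. }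
  assert (I1 : is_RInt (fun y => (x - x1)^2 + (y - y1)^2) 0 h ((x-x1)^2*h + ((h-y1)^3+y1^3)/3)).
  { apply (poly_RInt _ (fun y => (x-x1)^2*y + (y-y1)^3/3)).
    - intros y. auto_derive. easy. field.
    - intros y. auto_derive. easy.
    - field. }
  assert (I2 : is_RInt (fun y => (x - x2)^2 + (y - y2)^2) h 1 ((x-x2)^2*(1-h) + ((1-y2)^3-(h-y2)^3)/3)).
  { apply (poly_RInt _ (fun y => (x-x2)^2*y + (y-y2)^3/3)).
    - intros y. auto_derive. easy. field.
    - intros y. auto_derive. easy.
    - field. }
  assert (J1 : is_RInt (fun y => Rmin ((x - x1)^2 + (y - y1)^2) ((x - x2)^2 + (y - y2)^2)) 0 h
                ((x-x1)^2*h + ((h-y1)^3+y1^3)/3)).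
  { eapply is_RInt_ext; [|exact I1]. intros y Hy.
    rewrite Rmin_left in Hy by lra. rewrite Rmax_right in Hy by lra.
    rewrite Rmin_left; [reflexivity|]. specialize (K y). nra. }
  assert (J2 : is_RInt (fun y => Rmin ((x - x1)^2 + (y - y1)^2) ((x - x2)^2 + (y - y2)^2)) h 1
                ((x-x2)^2*(1-h) + ((1-y2)^3-(h-y2)^3)/3)).
  { eapply is_RInt_ext; [|exact I2]. intros y Hy.
    rewrite Rmin_left in Hy by lra. rewrite Rmax_right in Hy by lra.
    rewrite Rmin_right; [reflexivity|]. specialize (K y). nra. }
  assert (J := is_RInt_Chasles _ _ _ _ _ _ J1 J2).
  replace (Phi _ _ _ _ _ _ x) with (plus ((x-x1)^2*h + ((h-y1)^3+y1^3)/3) ((x-x2)^2*(1-h) + ((1-y2)^3-(h-y2)^3)/3)).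
  exact J. unfold plus; simpl. unfold Phi, h. field.
Qed.

Lemma Psi_der (a b x1 y1 x2 y2 x : R) : is_derive (Psi a b x1 y1 x2 y2) x (Phi a b x1 y1 x2 y2 x).
Proof. unfold Psi, Phi. auto_derive. easy. field. Qed.

Lemma outer (L : R) (Hf : (nat -> R) -> R) (w : nat -> R) : 1 <= L -> IsCVTEnergy L Hf ->
  0 < w 3%nat - w 1%nat ->
  (forall x, 0 <= x <= L -> 0 <= alp (w 0%nat) (w 1%nat) (w 2%nat) (w 3%nat) + bet (w 0%nat) (w 1%nat) (w 2%nat) (w 3%nat) * x <= 1) ->
  Hf w = F4 L (w 0%nat) (w 1%nat) (w 2%nat) (w 3%nat).
Proof.
  intros hL hH Hd Hh. destruct (hH w) as [g [Hg HI]].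
  apply (IsRInt_uniq g 0 L); [exact HI|].
  apply is_RInt_ext with (f := Phi (alp (w 0%nat) (w 1%nat) (w 2%nat) (w 3%nat)) (bet (w 0%nat) (w 1%nat) (w 2%nat) (w 3%nat)) (w 0%nat) (w 1%nat) (w 2%nat) (w 3%nat)).
  - intros x Hx. rewrite Rmin_left in Hx by lra. rewrite Rmax_right in Hx by lra.
    symmetry. apply (IsRInt_uniq (fun y => cvt_integrand w x y) 0 1).
    + apply Hg; lra.
    + unfold cvt_integrand. apply inner; auto. apply Hh; lra.
  - apply (poly_RInt _ (Psi (alp (w 0%nat) (w 1%nat) (w 2%nat) (w 3%nat)) (bet (w 0%nat) (w 1%nat) (w 2%nat) (w 3%nat)) (w 0%nat) (w 1%nat) (w 2%nat) (w 3%nat))).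
    + intros x. apply Psi_der.
    + intros x. unfold Phi. auto_derive. easy.
    + unfold F4, Psi. field.
Qed.

Lemma box (L dl x1 y1 x2 y2 : R) : 1 <= L -> dl = /(100*L) ->
  Rabs (x1 - L/2) < dl -> Rabs (y1 - 1/4) < dl -> Rabs (x2 - L/2) < dl -> Rabs (y2 - 3/4) < dl ->
  0 < y2 - y1 /\ forall x, 0 <= x <= L -> 0 <= alp x1 y1 x2 y2 + bet x1 y1 x2 y2 * x <= 1.
Proof.
  intros hL hdl H1 H2 H3 H4.
  assert (dpos : 0 < dl) by (rewrite hdl; apply Rinv_0_lt_compat; lra).
  assert (dL : dl * L = 1/100) by (rewrite hdl; field; lra).
  assert (dsm : dl <= 1/100) by nra.
  apply Rabs_def2 in H1, H2, H3, H4.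
  split; [lra|]. intros x Hx.
  set (s := x2 - x1). set (c := x1 + x2 - 2*x).
  assert (Hs : Rabs s < 2*dl) by (apply Rabs_def1; unfold s; lra).
  assert (Hc : Rabs c <= L + 2*dl) by (apply Rabs_le; unfold c; lra).
  assert (Hsc : Rabs (s*c) <= 2*dl*(L+2*dl)).
  { rewrite Rabs_mult. apply Rmult_le_compat; try apply Rabs_pos; lra. }
  assert (Hsc2 : Rabs (s*c) <= 3/100) by nra.
  assert (HE : -(3/100) <= s*c <= 3/100).
  { revert Hsc2. unfold Rabs. destruct (Rcase_abs (s*c)); intros; lra. }
  assert (Hid : (alp x1 y1 x2 y2 + bet x1 y1 x2 y2 * x) * (2*(y2-y1)) = s*c + (y2-y1)*(y1+y2)).
  { unfold alp, bet, s, c. field. lra. }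
  set (h := alp x1 y1 x2 y2 + bet x1 y1 x2 y2 * x) in *.
  assert (P1 : (y2-y1)*(y1+y2) >= 47/100).
  { assert (0 <= (y2-y1 - 48/100)*(y1+y2 - 98/100)) by (apply Rmult_le_pos; lra). nra. }
  assert (P2 : (y2-y1)*(2-(y1+y2)) >= 47/100).
  { assert (0 <= (y2-y1 - 48/100)*(2-(y1+y2) - 98/100)) by (apply Rmult_le_pos; lra). nra. }
  split; nra.
Qed.

Definition Gfun (L : R) (i : nat) (w : nat -> R) : R := G4 L i (w 0%nat) (w 1%nat) (w 2%nat) (w 3%nat).
Definition Mh (L : R) (i j : nat) : R :=
  match i, j with
  | 0,0 => L - L^3/3 | 0,2 => L^3/3 | 2,0 => L^3/3 | 2,2 => L - L^3/3
  | 1,1 => 3*L/4 | 1,3 => -(L/4) | 3,1 => -(L/4) | 3,3 => 3*L/4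
  | _,_ => 0 end.
Lemma hess (L : R) (i j : nat) : (i < 4)%nat -> (j < 4)%nat -> partial (Gfun L i) (config L) j (Mh L i j).
Proof.
  intros Hi Hj. unfold partial. apply is_derive_Reals.
  destruct i as [|[|[|[|i]]]]; try lia; destruct j as [|[|[|[|j]]]]; try lia;
  unfold Gfun, upd, config, G4, alp, bet, Mh; simpl; cbv zeta;
  auto_derive; (try (repeat split; auto; intro; lra)); field.
Qed.

Lemma cp (L t : R) : charpoly4 (Mh L) t = (t-L)^2*(t-L/2)*(t-(L-2*L^3/3)).
Proof. unfold charpoly4. simpl. unfold minor. simpl. field. Qed.

Lemma grad_part (L : R) (Hf : (nat -> R) -> R) (w : nat -> R) (i : nat) :
  1 <= L -> IsCVTEnergy L Hf ->
  (forall k, (k < 4)%nat -> Rabs (w k - config L k) < /(100*L)) -> (i < 4)%nat ->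
  partial Hf w i (Gfun L i w).
Proof.
  intros hL hH Hw Hi. unfold partial. apply is_derive_Reals.
  assert (He : 0 < /(100*L) - Rabs (w i - config L i)) by (specialize (Hw i Hi); lra).
  assert (Hbox : forall v : nat -> R, (forall k, (k < 4)%nat -> Rabs (v k - config L k) < /(100*L)) ->
     0 < v 3%nat - v 1%nat /\ forall x, 0 <= x <= L ->
       0 <= alp (v 0%nat) (v 1%nat) (v 2%nat) (v 3%nat) + bet (v 0%nat) (v 1%nat) (v 2%nat) (v 3%nat) * x <= 1).
  { intros v Hv. apply (box L (/(100*L))); auto;
    first [apply (Hv 0%nat) | apply (Hv 1%nat) | apply (Hv 2%nat) | apply (Hv 3%nat)]; lia. }
  apply is_derive_ext_loc with
    (f := fun t => F4 L (upd w i t 0%nat) (upd w i t 1%nat) (upd w i t 2%nat) (upd w i t 3%nat)).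
  - exists (mkposreal _ He). intros y Hy. change (Rabs (y - w i) < /(100*L) - Rabs (w i - config L i)) in Hy.
    assert (Hb : forall k, (k < 4)%nat -> Rabs (upd w i y k - config L k) < /(100*L)).
    { intros k Hk. unfold upd. destruct (Nat.eqb k i) eqn:E.
      - apply Nat.eqb_eq in E. subst k.
        replace (y - config L i) with ((y - w i) + (w i - config L i)) by ring.
        eapply Rle_lt_trans; [apply Rabs_triang|]. lra.
      - apply Hw; auto. }
    destruct (Hbox _ Hb) as [Hd Hh].
    symmetry. apply outer; auto.
  - destruct (Hbox _ Hw) as [Hd _].
    destruct i as [|[|[|[|i]]]]; try lia; unfold upd, Gfun; simpl.
    + apply dF0; lra.
    + apply dF1; lra.
    + apply dF2; lra.
    + apply dF3; lra.
Qed.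

Theorem mainTheorem9 (L : R) (hL : 1 <= L) (Hf : (nat -> R) -> R)
  (hH : IsCVTEnergy L Hf) :
  exists M : nat -> nat -> R,
    IsHessian4 Hf (config L) M /\
    (L > sqrt (3 / 2) -> exactly_one_negative_eigenvalue4 M) /\
    (L = sqrt (3 / 2) -> is_eigenvalue4 M 0).
Proof.
  exists (Mh L). split; [|split].
  - exists (Gfun L), (/(100*L)). split; [apply Rinv_0_lt_compat; lra|]. split.
    + intros w Hw i Hi. apply grad_part; auto.
    + intros i j Hi Hj. apply hess; auto.
  - intros HL.
    assert (Hs : sqrt (3/2) * sqrt (3/2) = 3/2) by (apply sqrt_sqrt; lra).
    assert (Hs0 : 0 <= sqrt (3/2)) by apply sqrt_pos.
    assert (HL2 : L * L > 3/2) by nra.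
    set (lam := L - 2*L^3/3).
    assert (Hlam : lam < 0) by (unfold lam; simpl; nra).
    exists lam. split; [exact Hlam|]. split.
    + split.
      * unfold is_eigenvalue4. rewrite cp. unfold lam. field.
      * exists ((lam-L)^2*(lam-L/2)). split.
        -- apply is_derive_Reals.
           apply is_derive_ext with (f := fun t => (t-L)^2*(t-L/2)*(t-(L-2*L^3/3))).
           { intros t. rewrite cp. reflexivity. }
           auto_derive. easy. unfold lam. field.
        -- intro H0. apply Rmult_integral in H0. destruct H0 as [H0|H0].
           ++ simpl in H0. rewrite Rmult_1_r in H0. apply Rmult_integral in H0. unfold lam in *; lra.
           ++ lra.
    + intros mu Hmu Hev. unfold is_eigenvalue4 in Hev. rewrite cp in Hev.
      apply Rmult_integral in Hev. destruct Hev as [H0|H0].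
      * apply Rmult_integral in H0. destruct H0 as [H0|H0].
        -- simpl in H0. rewrite Rmult_1_r in H0. apply Rmult_integral in H0. unfold lam in *; lra.
        -- lra.
      * unfold lam. lra.
  - intros HL. unfold is_eigenvalue4. rewrite cp.
    assert (Hs : sqrt (3/2) * sqrt (3/2) = 3/2) by (apply sqrt_sqrt; lra).
    assert (H0 : L - 2*L^3/3 = 0).
    { assert (HLL : L*L = 3/2) by (rewrite HL; exact Hs). simpl.
      replace (L*(L*(L*1))) with (L*(L*L)) by field. rewrite HLL. field. }
    rewrite H0. field.
Qed.
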